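(* Let $(B,+)$ be an abelian group and let $\lambda\colon(B,+)\to\operatorname{Aut}(B,+)$, $x\mapsto\lambda_x$, be a group homomorphism such that $\lambda_{\lambda_y(x)}=\lambda_x$ for all $x,y\in B$. Define a product on $B$ by $xy=x+\lambda_x(y)$ for $x,y\in B$. Then $(B,+,\cdot)$ is a left brace with $B^{(3)}=\{0\}$.
   Context: A left brace $(A,+,\cdot)$ is a set $A$ with two binary operations such that $(A,+)$ is an abelian group, $(A,\cdot)$ is a group, and $a(b+c)=ab-a+ac$ for all $a,b,c\in A$. In a left brace, $a*b=-a+ab-b$. For subsets $L,M\subseteq A$, $L*M$ is the subgroup of $(A,+)$ generated by $\{l*m\mid l\in L,m\in M\}$. Set $A^{(1)}=A$ and $A^{(r+1)}=A^{(r)}*A$ for $r\ge1$. *)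

(* Defs.v *)
From HB Require Import structures.
From mathcomp Require Import all_boot all_order all_algebra.
Set Implicit Arguments. Unset Strict Implicit. Unset Printing Implicit Defensive.
Import GRing.Theory.
Local Open Scope ring_scope.

Definition is_group_op (B : Type) (mul : B -> B -> B) : Prop :=
  associative mul /\
  exists e : B, left_id e mul /\ right_id e mul /\
    forall a : B, exists b : B, mul a b = e /\ mul b a = e.

Definition left_brace (B : zmodType) (mul : B -> B -> B) : Prop :=
  is_group_op mul /\
  forall a b c : B, mul a (b + c) = mul a b - a + mul a c.

Definition brace_star (B : zmodType) (mul : B -> B -> B) (a b : B) : B :=
  - a + mul a b - b.

Inductive add_span (B : zmodType) (S : B -> Prop) : B -> Prop :=
  | add_span_in : forall x, S x -> add_span S x
  | add_span_0 : add_span S 0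
  | add_span_sub : forall x y, add_span S x -> add_span S y -> add_span S (x - y).

Definition star_set (B : zmodType) (mul : B -> B -> B) (L M : B -> Prop) : B -> Prop :=
  add_span (fun z => exists l m, L l /\ M m /\ z = brace_star mul l m).

(* brace_series mul r = A^(r+1) *)
Fixpoint brace_series (B : zmodType) (mul : B -> B -> B) (r : nat) : B -> Prop :=
  match r with
  | 0 => fun _ => True
  | r'.+1 => star_set mul (brace_series mul r') (fun _ => True)
  end.

(* A^(r) for r >= 1, as in the paper *)
Definition brace_pow (B : zmodType) (mul : B -> B -> B) (r : nat) : B -> Prop :=
  brace_series mul r.-1.

(* Main.v *)
Require Import Defs.
From mathcomp Require Import all_boot all_order all_algebra.
Import GRing.Theory.
Local Open Scope ring_scope.

Theorem theoremA (B : zmodType) (lam : B -> B -> B)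
  (lam_add : forall x y z : B, lam x (y + z) = lam x y + lam x z)
  (lam_bij : forall x : B, bijective (lam x))
  (lam_hom : forall x y z : B, lam (x + y) z = lam x (lam y z))
  (lam_cond : forall x y : B, lam (lam y x) = lam x) :
  left_brace (fun x y : B => x + lam x y) /\
  (forall z : B, brace_pow (fun x y : B => x + lam x y) 3 z -> z = 0).
Proof.
have lam0 : forall z, lam 0 z = z.
  move=> z; case: (lam_bij 0) => g gK _.
  have := lam_hom 0 0 z; rewrite addr0 => h.
  by rewrite -{2}(gK z) {2}h gK.
have lamx0 : forall x, lam x 0 = 0.
  move=> x; have := lam_add x 0 0; rewrite addr0 => h.
  by apply: (addrI (lam x 0)); rewrite -h addr0.
have lamN : forall x y, lam x (- y) = - lam x y.
  move=> x y; apply: (addrI (lam x y)).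
  by rewrite -lam_add !subrr lamx0.
have lamNx : forall x z, lam (- x) (lam x z) = z.
  by move=> x z; rewrite -lam_hom addNr lam0.
split.
  split; last first.
    by move=> a b c; rewrite lam_add [a + lam a b]addrC addrK addrCA.
  split.
    move=> x y z /=; rewrite lam_hom lam_cond lam_add !addrA //.
  exists 0; split; first by move=> a; rewrite lam0 add0r.
  split; first by move=> a; rewrite lamx0 addr0.
  move=> a; exists (- lam (- a) a); split.
    by rewrite lamN -lam_hom subrr lam0 subrr.
  rewrite -lamN lam_cond.
  have -> : lam (- a) (- a) = - lam (- a) a by rewrite lamN.
  by rewrite addNr.
move=> z /=; rewrite /brace_pow /=.
(* elements of B^(2) act trivially *)
have triv : forall l, add_span (fun z => exists l0 m, True /\ True /\
      z = brace_star (fun x y : B => x + lam x y) l0 m) l -> forall w, lam l w = w.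
  move=> l; elim => [x [a [b [_ [_ ->]]]]| |x y _ IHx _ IHy] w.
  - rewrite /brace_star addKr lam_hom lam_cond.
    by rewrite -lam_hom addrN lam0.
  - by rewrite lam0.
  - rewrite lam_hom IHx.
    by rewrite -{1}(IHy w) lamNx.
elim => [x [l [m [Hl [_ ->]]]]| |x y _ -> _ ->].
- by rewrite /brace_star addKr (triv _ Hl) subrr.
- by [].
- by rewrite subrr.
Qed.
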